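(* Let $\mathcal{X}$ be a finite nonempty set of types, $n=(n_x)_{x\in\mathcal{X}}$ nonnegative integers with $n_x$ even for every $x$, and $\Phi=(\Phi_{xy})_{x,y\in\mathcal{X}}$ a real matrix with $\Phi_{xy}=\Phi_{yx}$ for all $x,y$. Then a stable roommate matching exists.
   Context: Roommate matching with transferable utility: $n_x$ is the number of individuals of type $x$; a pair of types $\{x,y\}$ (possibly $x=y$) generates joint surplus $\Phi_{xy}$; singles get utility $0$. Feasible roommate matchings: $\mathcal{P}(n)=\{\mu=(\mu_{xy})_{x,y\in\mathcal{X}}:\ \mu_{xy}\in\mathbb{N},\ \mu_{xy}=\mu_{yx},\ 2\mu_{xx}+\sum_{y\neq x}\mu_{xy}\le n_x\ \forall x\}$. Total surplus $S_R(\mu;\Phi)=\sum_x\mu_{xx}\Phi_{xx}+\sum_{x\neq y}\mu_{xy}\Phi_{xy}/2$. An outcome is a pair $(\mu,u)$ with $\mu\in\mathcal{P}(n)$, $u\in\mathbb{R}^{\mathcal{X}}$ and $\sum_x n_xu_x=S_R(\mu;\Phi)$; it is stable if $u_x\ge0$ and $u_x+u_y\ge\Phi_{xy}$ for all $x,y\in\mathcal{X}$. A matching $\mu$ is a stable roommate matching if some $u$ makes $(\mu,u)$ a stable outcome. *)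

(* Defs.v *)
From mathcomp Require Import all_boot all_order all_algebra.
Set Implicit Arguments. Unset Strict Implicit. Unset Printing Implicit Defensive.
Import Order.TTheory GRing.Theory Num.Theory.
Local Open Scope ring_scope.

Section Roommate.
Variables (R : realFieldType) (X : finType).

Definition feasible_matching (n : X -> nat) (mu : X -> X -> nat) : Prop :=
  (forall x y, mu x y = mu y x) /\
  (forall x, (2 * mu x x + \sum_(y | y != x) mu x y <= n x)%N).

Definition total_surplus (Phi : X -> X -> R) (mu : X -> X -> nat) : R :=
  \sum_x (mu x x)%:R * Phi x x
  + \sum_x \sum_(y | y != x) (mu x y)%:R * Phi x y / 2.

Definition is_outcome (n : X -> nat) (Phi : X -> X -> R)
  (mu : X -> X -> nat) (u : X -> R) : Prop :=
  feasible_matching n mu /\ \sum_x (n x)%:R * u x = total_surplus Phi mu.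

Definition stable_outcome (n : X -> nat) (Phi : X -> X -> R)
  (mu : X -> X -> nat) (u : X -> R) : Prop :=
  is_outcome n Phi mu u /\
  (forall x, 0 <= u x) /\ (forall x y, Phi x y <= u x + u y).

Definition stable_roommate_matching (n : X -> nat) (Phi : X -> X -> R)
  (mu : X -> X -> nat) : Prop :=
  feasible_matching n mu /\ exists u : X -> R, stable_outcome n Phi mu u.

End Roommate.

(* Main.v *)
Require Import Defs.
From mathcomp Require Import all_boot all_order all_algebra all_fingroup.
From mathcomp Require Import zify ring lra.
Set Implicit Arguments. Unset Strict Implicit. Unset Printing Implicit Defensive.
Import Order.TTheory GRing.Theory Num.Theory.
Local Open Scope ring_scope.

Lemma exmax (T : finType) (R : realDomainType) (t0 : T) (f : T -> R) :
  exists t, forall s, f s <= f t.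
Proof.
case: (@arg_maxP _ _ _ t0 xpredT f erefl) => t _ H.
by exists t => s; apply: H.
Qed.

Section Walks.
Variables (R : realFieldType) (V : finType).

Fixpoint pw (w : V -> V -> R) (x : V) (s : seq V) : R :=
  if s is y :: s' then w x y + pw w y s' else 0.

Lemma pw_cat w x s1 s2 : pw w x (s1 ++ s2) = pw w x s1 + pw w (last x s1) s2.
Proof.
elim: s1 x => [|y s1 IH] x /=; first by rewrite add0r.
by rewrite IH addrA.
Qed.

Lemma nonuniq_split (s : seq V) : ~~ uniq s ->
  exists a y b c, s = a ++ y :: b ++ y :: c.
Proof.
elim: s => [|z r IH] //=; rewrite negb_and negbK.
case: (boolP (z \in r)) => [zr _|_ /= /IH [a [y [b [c ->]]]]].
  case/splitPr: zr => p1 p2; by exists [::], z, p1, p2.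
by exists (z :: a), y, b, c.
Qed.

Lemma pos_uniq w : forall N x s, (size s < N)%N -> last x s = x -> 0 < pw w x s ->
  exists y q, uniq (y :: q) /\ 0 < pw w y (rcons q y).
Proof.
elim=> [//|N IH] x s Hs Hl Hp.
case: (boolP (uniq s)) => [Us|/nonuniq_split [a [y [b [c Es]]]]].
  move: Us Hl Hp; case/lastP: s {Hs} => [|q z] //=; first by rewrite ltxx.
  rewrite last_rcons => Us <- Hp; exists z, q; split => //.
  by rewrite /= -rcons_uniq.
have E1 : s = rcons a y ++ (rcons b y ++ c) by rewrite Es !cat_rcons.
have Hw : pw w x s = pw w x (a ++ y :: c) + pw w y (rcons b y).
  rewrite E1 pw_cat last_rcons pw_cat last_rcons -cat_rcons pw_cat last_rcons.
  by ring.
have [H1|H1] := ltrP 0 (pw w y (rcons b y)).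
  apply: (IH y (rcons b y)) => //; last by rewrite last_rcons.
  by move: Hs; rewrite Es size_cat /= size_cat size_rcons /=; lia.
apply: (IH x (a ++ y :: c)).
- by move: Hs; rewrite Es !size_cat /= size_cat /=; lia.
- by rewrite -Hl Es !last_cat /= last_cat.
- by rewrite Hw in Hp; lra. 
Qed.

Lemma pw_path w (f : V -> V) x s : path (frel f) x s ->
  pw w x s = \sum_(i <- belast x s) w i (f i).
Proof.
elim: s x => [|y s IH] x /=; first by rewrite big_nil.
case/andP => /eqP <- Hp; by rewrite big_cons IH.
Qed.

Lemma cycle_sum w x q : uniq (x :: q) -> (forall i, w i i = 0) ->
  \sum_i w i (next (x :: q) i) = pw w x (rcons q x).
Proof.
move=> Uq w0; have Hc : path (frel (next (x :: q))) x (rcons q x) by exact: (cycle_next Uq).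
rewrite (pw_path w Hc) belast_rcons (big_uniq _ Uq).
rewrite [RHS]big_mkcond; apply: eq_bigr => i _; case: ifP => // /negbT /negbTE Hi.
by have := next_nth (x :: q) i; rewrite Hi => ->; rewrite w0.
Qed.

Lemma potential : forall N (S : {set V}) (w : V -> V -> R), (#|S| < N)%N ->
  (forall x s, last x s = x -> x \in S -> all (mem S) s -> pw w x s <= 0) ->
  exists pi : V -> R, forall i k, i \in S -> k \in S -> pi i + w i k <= pi k.
Proof.
elim=> [//|N IH] S w HN H.
case: (set_0Vmem S) => [->|[v vS]].
  by exists (fun=> 0) => i k; rewrite inE.
set S' := S :\ v.
pose w' i k := if w i v + w v k <= w i k then w i k else w i v + w v k.
pose fix ex (x : V) (s : seq V) : seq V :=
  if s is y :: s' then (if w x v + w v y <= w x y then [:: y] else [:: v; y]) ++ ex y s'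
  else [::].
have exl : forall x s, last x (ex x s) = last x s.
  move=> x s; elim: s x => [|y s IHs] x //=.
  by rewrite last_cat; case: ifP => _ /=; rewrite IHs.
have exw : forall x s, pw w' x s = pw w x (ex x s).
  move=> x s; elim: s x => [|y s IHs] x //=.
  rewrite pw_cat /w'; case: ifP => _ /=; rewrite IHs ?addr0 //.
have exS : forall x s, all (mem S') s -> all (mem S) (ex x s).
  move=> x s; elim: s x => [|y s IHs] x //=.
  case/andP => yS /IHs Hs; rewrite all_cat Hs andbT.
  have yS' : y \in S by move: yS; rewrite !inE => /andP [].
  by case: ifP => _ /=; rewrite yS' ?vS.
have HN' : (#|S'| < N)%N by move: HN; rewrite (cardsD1 v S) vS.
have [pi' Hpi'] : exists pi' : V -> R,
    forall i k, i \in S' -> k \in S' -> pi' i + w' i k <= pi' k.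
  apply: (IH S' w' HN') => x s Hl xS Hs.
  rewrite exw; apply: H; first by rewrite exl.
    by move: xS; rewrite !inE => /andP [].
  exact: exS.
have wvv : w v v <= 0.
  by have := H v [:: v] erefl vS; rewrite /= vS addr0; apply.
have w'ge : forall i k, w i k <= w' i k /\ w i v + w v k <= w' i k.
  by move=> i k; rewrite /w'; case: ifP => [->|/negbT]; rewrite ?lexx //; rewrite -ltNge => /ltW.
case: (set_0Vmem S') => [S'0|[k0 k0S]].
  exists (fun=> 0) => i k; rewrite add0r.
  have Hv : forall j, j \in S -> j = v.
    move=> j jS; apply/eqP; apply: contraT => Hj.
    have : j \in S' by rewrite !inE Hj jS.
    by rewrite S'0 inE.
  by move=> /Hv -> /Hv ->.
case: (@arg_minP _ _ _ k0 (mem S') (fun k => pi' k - w v k) k0S) => k1 k1S Hk1.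
pose M := pi' k1 - w v k1.
exists (fun x => if x == v then M else pi' x) => i k iS kS.
case: (eqVneq i v) => [->|iv]; case: (eqVneq k v) => [->|kv].
- by rewrite gerDl.
- have kS' : k \in S' by rewrite !inE kv.
  have := Hk1 k kS'; rewrite /M; lra.
- have iS' : i \in S' by rewrite !inE iv.
  have := Hpi' i k1 iS' k1S; have [_ h] := w'ge i k1; rewrite /M; lra.
- have iS' : i \in S' by rewrite !inE iv.
  have kS' : k \in S' by rewrite !inE kv.
  have := Hpi' i k iS' kS'; have [h _] := w'ge i k; lra.
Qed.

End Walks.

Lemma pK (T : finType) (s : {perm T}) x : (s^-1)%g (s x) = x.
Proof. by rewrite -permM mulgV perm1. Qed.
Lemma pKV (T : finType) (s : {perm T}) x : s ((s^-1)%g x) = x.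
Proof. by rewrite -permM mulVg perm1. Qed.

Lemma assignment (R : realFieldType) (U : finType) (B : U -> U -> R) :
  exists (s : {perm U}) (a b : U -> R),
    (forall i j, B i j <= a i + b j) /\
    \sum_i a i + \sum_j b j = \sum_i B i (s i).
Proof.
have [s Hs] := exmax 1%g (fun t : {perm U} => \sum_i B i (t i)).
pose w i k := B k (s i) - B i (s i).
have Hw : forall x l, last x l = x -> x \in [set: U] -> all (mem [set: U]) l ->
    pw w x l <= 0.
  move=> x l Hl _ _; rewrite leNgt; apply/negP => Hp.
  have [y [q [Uq Hq]]] := @pos_uniq R U w (size l).+1 x l (ltnSn _) Hl Hp.
  pose t := perm (can_inj (prev_next Uq)).
  rewrite -cycle_sum // in Hq; last by move=> i; rewrite /w subrr.
  have := Hs (t^-1 * s)%g.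
  have -> : \sum_i B i ((t^-1 * s)%g i) = \sum_i B (t i) (s i).
    rewrite (reindex_inj (@perm_inj _ t)); apply: eq_bigr => i _.
    by rewrite permM; congr (B _ (s _)); rewrite -permM mulgV perm1.
  have E : \sum_i w i (next (y :: q) i) = \sum_i B (t i) (s i) - \sum_i B i (s i).
    rewrite -sumrB; apply: eq_bigr => i _; by rewrite /w permE.
  rewrite E in Hq.
  lra.
have [pi Hpi] := @potential R U (#|[set: U]|.+1) [set: U] w (ltnSn _) Hw.
exists s, pi, (fun j => B ((s^-1)%g j) j - pi ((s^-1)%g j)); split.
  have H : forall i i', B i (s i') <= pi i + (B i' (s i') - pi i').
    move=> i i'; have := Hpi i' i (in_setT _) (in_setT _); rewrite /w; lra.
  move=> i j; have := H i ((s^-1)%g j); by rewrite !pKV.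
rewrite [X in _ + X](reindex_inj (@perm_inj _ s)) /=.
under [X in _ + X]eq_bigr do rewrite pK.
rewrite sumrB; lra.
Qed.


Section Units.
Variables (X : finType) (m : X -> nat).
Definition U := {x : X & 'I_(m x)}.
Definition tg x (k : 'I_(m x)) : U := Tagged (fun z => 'I_(m z)) k.

Lemma sumU (T : Type) (idx : T) (op : Monoid.com_law idx) (F : U -> T) :
  \big[op/idx]_(p : U) F p = \big[op/idx]_x \big[op/idx]_(k : 'I_(m x)) F (tg k).
Proof.
rewrite (@sig_big_dep _ _ op X (fun x : X => 'I_(m x)) xpredT (fun _ => xpredT)
   (fun x (k : 'I_(m x)) => F (tg k))) /=.
by apply: eq_bigr => -[x k].
Qed.

Lemma sum_pick (R : pzSemiRingType) (c : X) (F : X -> R) :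
  \sum_y (c == y)%:R * F y = F c.
Proof.
rewrite (bigD1 c) //= eqxx mul1r big1 ?addr0 // => y /negbTE.
by rewrite eq_sym => ->; rewrite mul0r.
Qed.
End Units.


Unset Implicit Arguments.

Lemma le_sumabs (X : finType) (R : realFieldType) (Phi : X -> X -> R) x y :
  Phi x y <= \sum_z `|Phi x z|.
Proof.
rewrite (bigD1 y) //=; apply: (le_trans (ler_norm _)).
by rewrite lerDl; apply: sumr_ge0 => z _; exact: normr_ge0.
Qed.

Theorem corollary1 (R : realFieldType) (X : finType) (x0 : X)
  (n : X -> nat) (Phi : X -> X -> R)
  (heven : forall x, ~~ odd (n x))
  (hsym : forall x y, Phi x y = Phi y x) :
  exists mu : X -> X -> nat, stable_roommate_matching n Phi mu.
Proof.
pose m x := (n x)./2.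
have nE : forall x, n x = (m x).*2.
  by move=> x; rewrite -[LHS]odd_double_half (negbTE (heven x)).
have [s [a [b [Hab Hsum]]]] :=
  assignment (fun i j : U m => Num.max (Phi (tag i) (tag j)) 0).
pose A x := \sum_(k : 'I_(m x)) a (tg k).
pose Bb x := \sum_(k : 'I_(m x)) b (tg k).
have key : forall x y, (m x)%:R * (m y)%:R * Num.max (Phi x y) 0 <=
    (m y)%:R * A x + (m x)%:R * Bb y :> R.
  move=> x y.
  have E : \sum_(k : 'I_(m x)) \sum_(l : 'I_(m y)) (a (tg k) + b (tg l)) =
      (m y)%:R * A x + (m x)%:R * Bb y.
    under eq_bigr do rewrite big_split /= sumr_const card_ord.
    rewrite big_split /= sumr_const card_ord /A /Bb sumrMnl.
    by rewrite !mulr_natl.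
  rewrite -E.
  have E2 : \sum_(k : 'I_(m x)) \sum_(l : 'I_(m y)) Num.max (Phi x y) 0 =
      (m x)%:R * (m y)%:R * Num.max (Phi x y) 0.
    by rewrite !sumr_const !card_ord -mulrA !mulr_natl.
  rewrite -E2; apply: ler_sum => k _; apply: ler_sum => l _.
  exact: (Hab (tg k) (tg l)).
pose u x := if m x == 0%N then \sum_y `|Phi x y| else (A x + Bb x) / (2 * (m x)%:R).
have mpos : forall x, m x != 0%N -> 0 < (m x)%:R :> R.
  by move=> x; rewrite ltr0n lt0n.
have hAB : forall x, m x != 0%N -> A x + Bb x = 2 * (m x)%:R * u x.
  move=> x mx; rewrite /u (negbTE mx); field.
  by rewrite pnatr_eq0.
have u0 : forall x, 0 <= u x.
  move=> x; case: (eqVneq (m x) 0%N) => mx.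
    rewrite /u mx eqxx; apply: sumr_ge0 => y _; exact: normr_ge0.
  have := key x x; have := mpos x mx; have := hAB x mx.
  have : 0 <= Num.max (Phi x x) 0 by rewrite le_max lexx orbT.
  move: (Num.max _ _) (u x) (A x) (Bb x) ((m x)%:R) => M ux Ax Bx p M0 e pp k.
  have pM : 0 <= p * p * M by rewrite mulr_ge0 // mulr_ge0 // ltW.
  have e1 : p * Ax + p * Bx = (p * p) * (2 * ux) by rewrite -mulrDr e; ring.
  have : 0 <= (p * p) * (2 * ux) by lra.
  rewrite pmulr_rge0 ?mulr_gt0 //; lra.
have ustab : forall x y, Phi x y <= u x + u y.
  move=> x y; case: (eqVneq (m x) 0%N) => mx.
    rewrite {1}/u mx eqxx; have := le_sumabs _ _ Phi x y; have := u0 y; lra.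
  case: (eqVneq (m y) 0%N) => my.
    rewrite {2}/u my eqxx hsym; have := le_sumabs _ _ Phi y x; have := u0 x; lra.
  have := key x y; have := key y x; rewrite (hsym y x).
  have := mpos x mx; have := mpos y my; have := hAB x mx; have := hAB y my.
  have : Phi x y <= Num.max (Phi x y) 0 by rewrite le_max lexx.
  move: (Num.max (Phi x y) 0) (u x) (u y) (A x) (Bb x) (A y) (Bb y) ((m x)%:R) ((m y)%:R) (Phi x y).
  move=> M ux uy Ax Bx Ay By p r P PM e2 e1 rp pp k2 k1.
  have f1 : r * Ax + r * Bx = (p * r) * (2 * ux) by rewrite -mulrDr e1; ring.
  have f2 : p * Ay + p * By = (p * r) * (2 * uy) by rewrite -mulrDr e2; ring.
  have : 0 <= (p * r) * (2 * (ux + uy - Num.max P 0)).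
    have -> : (p * r) * (2 * (ux + uy - Num.max P 0)) = (p * r) * (2 * ux) + (p * r) * (2 * uy) - (p * r * Num.max P 0 + r * p * Num.max P 0) by ring.
    rewrite -f1 -f2 subr_ge0.
    have := lerD k1 k2; move/le_trans; apply.
    rewrite [X in X <= _](_ : _ = r * Ax + r * Bx + (p * Ay + p * By)) //; ring.
  rewrite pmulr_rge0 ?mulr_gt0 //; lra.
pose c x y : nat := (\sum_(k : 'I_(m x)) (tag (s (tg k)) == y))%N.
pose nu x y : nat := if 0 < Phi x y then c x y else 0%N.
pose mu x y : nat := if x == y then nu x x else (nu x y + nu y x)%N.
have sum1 : forall t : X, (\sum_y ((t == y) : nat))%N = 1%N.
  move=> t; rewrite (bigD1 t) //= eqxx big1 // => y; rewrite eq_sym => /negbTE ->.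
  done.
have cx : forall x, (\sum_y c x y)%N = m x.
  move=> x; rewrite exchange_big /=.
  under eq_bigr do rewrite sum1.
  by rewrite sum1_card card_ord.
have cy : forall x, (\sum_y c y x)%N = m x.
  move=> x.
  rewrite -(@sumU X m _ _ _ (fun p => ((tag (s p) == x) : nat))) /=.
  have -> : (\sum_(p : U m) ((tag (s p) == x) : nat) = \sum_(p : U m) ((tag p == x) : nat))%N.
    by rewrite [RHS](reindex_inj (@perm_inj _ s)).
  rewrite (@sumU X m _ _ _ (fun p => ((tag p == x) : nat))) /=.
  under eq_bigr do rewrite sum_nat_const card_ord.
  rewrite (bigD1 x) //= eqxx muln1 big1 ?addn0 // => y /negbTE ->.
  by rewrite muln0.
have nuc : forall x y, (nu x y <= c x y)%N.
  by move=> x y; rewrite /nu; case: ifP.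
have feas : feasible_matching n mu.
  split.
    by move=> x y; rewrite /mu eq_sym; case: eqP => [->|_] //; rewrite addnC.
  move=> x.
  have E1 : (\sum_y nu x y = nu x x + \sum_(y | y != x) nu x y)%N by rewrite (bigD1 x).
  have E2 : (\sum_y nu y x = nu x x + \sum_(y | y != x) nu y x)%N by rewrite (bigD1 x).
  have E3 : (\sum_(y | y != x) mu x y = \sum_(y | y != x) nu x y + \sum_(y | y != x) nu y x)%N.
    rewrite -big_split /=; apply: eq_bigr => y yx.
    by rewrite /mu eq_sym (negbTE yx).
  have L1 : (\sum_y nu x y <= m x)%N by rewrite -cx; apply: leq_sum => y _.
  have L2 : (\sum_y nu y x <= m x)%N by rewrite -cy; apply: leq_sum => y _.
  rewrite E3 /mu eqxx nE; lia.
have nuE : forall x, (n x)%:R * u x = A x + Bb x.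
  move=> x; case: (eqVneq (m x) 0%N) => mx.
    have A0 : A x = 0 by rewrite /A big1 // => -[k' hk]; exfalso; move: hk; rewrite mx.
    have B0 : Bb x = 0 by rewrite /Bb big1 // => -[k' hk]; exfalso; move: hk; rewrite mx.
    by rewrite nE mx mul0r A0 B0 addr0.
  by rewrite hAB // nE -muln2 natrM; ring.
have LHS : \sum_x (n x)%:R * u x = \sum_(p : U m) Num.max (Phi (tag p) (tag (s p))) 0.
  under eq_bigr do rewrite nuE.
  by rewrite big_split /= /A /Bb -(@sumU X m _ _ _ a) -(@sumU X m _ _ _ b).
have RHS : \sum_(p : U m) Num.max (Phi (tag p) (tag (s p))) 0 =
    \sum_x \sum_y (nu x y)%:R * Phi x y.
  rewrite (@sumU X m _ _ _ (fun p => Num.max (Phi (tag p) (tag (s p))) 0)) /=.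
  apply: eq_bigr => x _.
  have -> : \sum_(k : 'I_(m x)) Num.max (Phi (tag (tg k)) (tag (s (tg k)))) 0 =
      \sum_(k : 'I_(m x)) \sum_y ((tag (s (tg k)) == y))%:R * Num.max (Phi x y) 0.
    by apply: eq_bigr => k _; rewrite sum_pick.
  rewrite exchange_big /=; apply: eq_bigr => y _.
  rewrite -mulr_suml -natr_sum /nu /c; case: ifP => h.
    by rewrite max_l // ltW.
  by rewrite max_r ?mulr0 ?mul0r // leNgt h.
pose G x y := (nu x y)%:R * Phi x y.
have TS : total_surplus Phi mu = \sum_x \sum_y G x y.
  rewrite /total_surplus.
  have T2 : \sum_x \sum_(y | y != x) (mu x y)%:R * Phi x y / 2 =
      (\sum_x \sum_(y | y != x) G x y + \sum_x \sum_(y | y != x) G y x) / 2.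
    rewrite -big_split mulr_suml; apply: eq_bigr => x _.
    rewrite -big_split mulr_suml; apply: eq_bigr => y yx.
    by rewrite /mu eq_sym (negbTE yx) natrD mulrDl /G (hsym y x).
  have SW : \sum_x \sum_(y | y != x) G y x = \sum_x \sum_(y | y != x) G x y.
    rewrite (exchange_big_dep xpredT) //=; apply: eq_bigr => y _.
    by apply: eq_bigl => x; rewrite eq_sym.
  have h2 : forall z : R, (z + z) / 2 = z.
    by move=> z; lra.
  rewrite T2 SW h2 -big_split; apply: eq_bigr => x _.
  by rewrite /mu eqxx [X in _ = X](bigD1 x).
exists mu; split => //; exists u; split; last by split.
by split => //; rewrite LHS RHS TS.
Qed.
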